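(* Consider a finite game: players $I=\{1,\ldots,n\}$, finite nonempty pure strategy sets $S_i$, $S=\prod_i S_i$, payoffs $g_i\colon S\to\mathbb{R}$, mixed strategy sets $\Sigma_i$ (probability distributions on $S_i$), $\Sigma=\prod_i\Sigma_i\subseteq\mathbb{R}^k$ with the Euclidean distance, and $f_i\colon\Sigma\to\mathbb{R}$ the multilinear extension of $g_i$. Let $r\colon\Sigma\to S$ be a root function. Then for all $\sigma\in\Sigma$ and $i\in I$: (i) $\alpha_{r_i(\sigma)}(\sigma_i)>0$ and $A_i^{r_i(\sigma)}(\sigma)=0$; (ii) for every $s\in S_i$, if $s\notin\operatorname{supp}(\sigma_i)$ then $s\notin\operatorname{supp}(r_i(\sigma))$; (iii) if $(\sigma^k)_{k\in\mathbb{N}}$ is a sequence in $\Sigma$ with $\sigma^k\to\sigma$, $i\Uparrow\sigma^k$ for all $k$, and $A_i(\sigma)=0$, then $T(\sigma)=0$.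
   Context: Pure strategies $s\in S_i$ are identified with degenerate distributions in $\Sigma_i$. For $\sigma_i\in\Sigma_i$ and $s\in S_i$, $\alpha_s(\sigma_i)$ is the probability $\sigma_i$ assigns to $s$, and $\operatorname{supp}(\sigma_i)=\{s:\alpha_s(\sigma_i)>0\}$. For $\sigma\in\Sigma$, $\sigma(i,s)$ is the profile obtained by replacing $\sigma_i$ by $s$. Define $A_i^s(\sigma)=\max\{f_i(\sigma(i,s))-f_i(\sigma),0\}$, $A_i(\sigma)=\max_{s\in S_i}A_i^s(\sigma)$, $T(\sigma)=\sum_{i\in I}A_i(\sigma)$, and write $i\Uparrow\sigma$ if $A_i(\sigma)>\frac{T(\sigma)}{n+1}$. A root function is a map $r\colon\Sigma\to S$ such that for all $\sigma\in\Sigma$ and $i\in I$, $r_i(\sigma)\in\operatorname{supp}(\sigma_i)$ and $A_i^{r_i(\sigma)}(\sigma)=0$. *)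

(* Defs.v *)
From HB Require Import structures.
From mathcomp Require Import all_boot all_order all_algebra.
From mathcomp Require Import all_classical all_reals all_analysis.
Set Implicit Arguments. Unset Strict Implicit. Unset Printing Implicit Defensive.
Import Order.TTheory GRing.Theory Num.Theory.
Local Open Scope ring_scope.
Local Open Scope classical_set_scope.

Section FiniteGame.
Variables (R : realType) (n : nat) (S : 'I_n -> finType).

(* A (possibly mixed) profile: for each player i, a real-valued function on S_i.
   Sigma is the subset of those that are probability distributions. *)
Definition Prof := forall i : 'I_n, {ffun S i -> R}.

Definition PureProf := {dffun forall i : 'I_n, S i}.

Definition is_distr (i : 'I_n) (t : {ffun S i -> R}) : Prop :=
  (forall s, 0 <= t s) /\ \sum_(s : S i) t s = 1.

Definition mixed (sigma : Prof) : Prop := forall i, is_distr (sigma i).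

(* pure strategy s identified with the degenerate distribution at s *)
Definition delta (i : 'I_n) (s : S i) : {ffun S i -> R} :=
  [ffun t => (t == s)%:R].

(* alpha_s(sigma_i) is just sigma i s; support *)
Definition supp (i : 'I_n) (t : {ffun S i -> R}) : {set S i} :=
  [set s | 0 < t s].

Definition upd (sigma : Prof) (i : 'I_n) (t : {ffun S i -> R}) : Prof :=
  fun j => match i =P j with
           | ReflectT e => eq_rect i (fun k => {ffun S k -> R}) t j e
           | ReflectF _ => sigma j
           end.

Variable g : 'I_n -> PureProf -> R.

Definition f (i : 'I_n) (sigma : Prof) : R :=
  \sum_(s : PureProf) (\prod_(j < n) sigma j (s j)) * g i s.

Definition Again (i : 'I_n) (s : S i) (sigma : Prof) : R :=
  Num.max (f i (upd sigma (delta s)) - f i sigma) 0.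

(* max over s in S_i of Again (all values are >= 0, so 0 as neutral is harmless) *)
Definition Amax (i : 'I_n) (sigma : Prof) : R :=
  \big[Num.max/0]_(s : S i) Again s sigma.

Definition Ttot (sigma : Prof) : R := \sum_(i < n) Amax i sigma.

Definition up (i : 'I_n) (sigma : Prof) : Prop :=
  Amax i sigma > Ttot sigma / (n.+1)%:R.

Definition is_root (r : Prof -> forall i : 'I_n, S i) : Prop :=
  forall sigma, mixed sigma -> forall i,
    r sigma i \in supp (sigma i) /\ Again (r sigma i) sigma = 0.

Definition edist (sigma tau : Prof) : R :=
  Num.sqrt (\sum_(i < n) \sum_(s : S i) (sigma i s - tau i s) ^+ 2).

Definition prof_cvg (sk : nat -> Prof) (sigma : Prof) : Prop :=
  edist (sk k) sigma @[k --> \oo] --> 0%R.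

End FiniteGame.

(* Main.v *)
Require Import Defs.
From HB Require Import structures.
From mathcomp Require Import all_boot all_order all_algebra.
From mathcomp Require Import all_classical all_reals all_analysis.
Import Order.TTheory GRing.Theory Num.Theory.
Local Open Scope ring_scope.
Local Open Scope classical_set_scope.
Import numFieldNormedType.Exports.

Section Aux.
Variable R : realType.

Lemma cvg_bigop (I : Type) (op : R -> R -> R) (x0 : R) (r : seq I) (P : pred I)
  (F : I -> nat -> R) (a : I -> R) :
  (forall (u v : nat -> R) (x y : R), u k @[k --> \oo] --> x -> v k @[k --> \oo] --> y ->
      op (u k) (v k) @[k --> \oo] --> op x y) ->
  (forall i, F i k @[k --> \oo] --> a i) ->
  \big[op/x0]_(i <- r | P i) F i k @[k --> \oo] --> \big[op/x0]_(i <- r | P i) a i.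
Proof.
move=> Hop HF; elim: r => [|i r IHr].
  rewrite big_nil; under eq_cvg do rewrite big_nil; exact: cvg_cst.
rewrite big_cons; under eq_cvg do rewrite big_cons.
case: (P i) => //; exact: Hop.
Qed.

Lemma cvg_addR (u v : nat -> R) (x y : R) : u k @[k --> \oo] --> x -> v k @[k --> \oo] --> y ->
      (u k + v k) @[k --> \oo] --> x + y.
Proof. move=> hu hv; exact: (cvgD hu hv). Qed.

Lemma cvg_mulR (u v : nat -> R) (x y : R) : u k @[k --> \oo] --> x -> v k @[k --> \oo] --> y ->
      (u k * v k) @[k --> \oo] --> x * y.
Proof. move=> hu hv; exact: (cvgM hu hv). Qed.

Lemma cvg_maxR (u v : nat -> R) (x y : R) : u k @[k --> \oo] --> x -> v k @[k --> \oo] --> y ->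
      Num.max (u k) (v k) @[k --> \oo] --> Num.max x y.
Proof.
move=> hu hv.
under eq_cvg do rewrite maxr_absE.
rewrite maxr_absE.
apply: cvgM; last exact: cvg_cst.
apply: cvgD; first exact: cvgD.
by apply: cvg_norm; apply: cvgB.
Qed.

Variables (n : nat) (S : 'I_n -> finType) (g : 'I_n -> PureProf S -> R).

Definition pc (sk : nat -> Prof R S) (sigma : Prof R S) :=
  forall j t, sk k j t @[k --> \oo] --> sigma j t.

Lemma pc_of_cvg sk sigma : prof_cvg sk sigma -> pc sk sigma.
Proof.
move=> H j t.
have Hn : `|sk k j t - sigma j t| @[k --> \oo] --> (0:R).
  apply: (squeeze_cvgr _ (cvg_cst 0) H).
  near=> k; rewrite normr_ge0 /= /edist.
  rewrite -sqrtr_sqr; apply: ler_wsqrtr.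
  rewrite (bigD1 j) //= (bigD1 t) //= -addrA lerDl.
  apply: addr_ge0; first by apply: sumr_ge0 => ? _; exact: sqr_ge0.
  by apply: sumr_ge0 => ? _; apply: sumr_ge0 => ? _; exact: sqr_ge0.
have := norm_cvg0 Hn.
by move=> Hd; apply/subr_cvg0; exact: Hd.
Unshelve. all: by end_near.
Qed.

Lemma pc_f i sk sigma : pc sk sigma -> f g i (sk k) @[k --> \oo] --> f g i sigma.
Proof.
move=> H; rewrite /f.
apply: cvg_bigop => [|s]; first exact: cvg_addR.
apply: cvg_mulR; last exact: cvg_cst.
apply: cvg_bigop => [|j]; first exact: cvg_mulR.
exact: H.
Qed.

Lemma pc_upd i (t : {ffun S i -> R}) sk sigma : pc sk sigma ->
  pc (fun k => upd (sk k) t) (upd sigma t).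
Proof.
move=> H j u; rewrite /upd; case: (i =P j) => [e|_].
  exact: cvg_cst.
exact: H.
Qed.

Lemma pc_Again i (s : S i) sk sigma : pc sk sigma ->
  Again g s (sk k) @[k --> \oo] --> Again g s sigma.
Proof.
move=> H; rewrite /Again.
apply: cvg_maxR; last exact: cvg_cst.
apply: cvgB; last exact: pc_f.
by apply: pc_f; apply: pc_upd.
Qed.

Lemma pc_Amax i sk sigma : pc sk sigma ->
  Amax g i (sk k) @[k --> \oo] --> Amax g i sigma.
Proof.
move=> H; rewrite /Amax.
apply: cvg_bigop => [|s]; first exact: cvg_maxR.
exact: pc_Again.
Qed.

Lemma pc_Ttot sk sigma : pc sk sigma ->
  Ttot g (sk k) @[k --> \oo] --> Ttot g sigma.
Proof.
move=> H; rewrite /Ttot.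
apply: cvg_bigop => [|i]; first exact: cvg_addR.
exact: pc_Amax.
Qed.

Lemma Amax_ge0 i sigma : 0 <= Amax g i sigma.
Proof.
rewrite /Amax; elim/big_ind: _ => //.
- by move=> x y hx hy; rewrite le_max hx.
- by move=> s _; rewrite /Again le_max lexx orbT.
Qed.

Lemma Ttot_ge0 sigma : 0 <= Ttot g sigma.
Proof. by apply: sumr_ge0 => i _; exact: Amax_ge0. Qed.

End Aux.

Theorem mainTheorem3 (R : realType) (n : nat) (S : 'I_n -> finType)
  (HS : forall i, (0 < #|S i|)%N)
  (g : 'I_n -> PureProf S -> R)
  (r : Prof R S -> forall i : 'I_n, S i)
  (Hr : is_root g r) :
  forall sigma : Prof R S, mixed sigma -> forall i : 'I_n,
    [/\ 0 < sigma i (r sigma i) /\ Again g (r sigma i) sigma = 0,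
        (forall s : S i, s \notin supp (sigma i) ->
                         s \notin supp (delta R (r sigma i)))
      & (forall sk : nat -> Prof R S,
           (forall k, mixed (sk k)) ->
           prof_cvg sk sigma ->
           (forall k, up g i (sk k)) ->
           Amax g i sigma = 0 ->
           Ttot g sigma = 0)].
Proof.
move=> sigma Hm i.
have [Hs HA] := Hr sigma Hm i.
split.
- by split => //; move: Hs; rewrite inE.
- move=> s Hns; apply/negP; rewrite /supp inE /delta ffunE.
  have [e|ne] := eqVneq s (r sigma i); last by rewrite ltxx.
  by move=> _; move/negP: Hns; apply; rewrite e.
- move=> sk _ Hc Hup HA0.
  have Hpc := @pc_of_cvg R n S sk sigma Hc.
  have Hl : (Amax g i (sk k) - Ttot g (sk k) / (n.+1)%:R) @[k --> \oo] -->
            Amax g i sigma - Ttot g sigma / (n.+1)%:R.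
    apply: cvgB; first exact: pc_Amax.
    apply: cvgM; [exact: pc_Ttot | exact: cvg_cst].
  have H0 : 0 <= Amax g i sigma - Ttot g sigma / (n.+1)%:R.
    apply: (cvgr_to_ge Hl); near=> k.
    by rewrite subr_ge0; apply: ltW; exact: Hup.
  move: H0; rewrite HA0 sub0r oppr_ge0 => H0.
  apply/eqP; rewrite eq_le Ttot_ge0 andbT.
  by rewrite pmulr_lle0 // in H0; rewrite invr_gt0 ltr0n.
Unshelve. all: by end_near.
Qed.
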